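(* Let $p$ be an odd prime and $a_1,a_2\in\mathbb{Z}_p^*$. If $a_1,a_2$ are either both quadratic residues modulo $p$ or both quadratic nonresidues modulo $p$, then $Q_{a_1,0}(\mathbb{Z}_p)\cong Q_{a_2,0}(\mathbb{Z}_p)$.
   Context: Identify $\mathbb{Z}_p$ with $\{0,\dots,p-1\}$. The overflow indicator is $(x,y)_p=1$ if $x+y\ge p$ as integers and $0$ otherwise. $Q_{a,b}(\mathbb{Z}_p)$ is $\mathbb{Z}_p^3$ with multiplication $(x_1,x_2,x_3)(y_1,y_2,y_3)=(x_1+y_1+(x_2+y_2)x_3y_3+a(x_2,y_2)_p+b(x_3,y_3)_p,\ x_2+y_2,\ x_3+y_3)$. *)

(* Defs.v *)
From HB Require Import structures.
From mathcomp Require Import all_boot all_order all_algebra.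
Set Implicit Arguments. Unset Strict Implicit. Unset Printing Implicit Defensive.
Import GRing.Theory.
Local Open Scope ring_scope.

(* Z_p is identified with {0,...,p-1} via 'Z_p (p >= 2 assumed in uses). *)

(* overflow indicator (x,y)_p : 1 if x + y >= p as integers, else 0 *)
Definition ovf (p : nat) (x y : 'Z_p) : nat := ((p <= val x + val y)%N : nat).

Definition Qcar (p : nat) := ('Z_p * 'Z_p * 'Z_p)%type.

Definition Qmul (p : nat) (a b : 'Z_p) (x y : Qcar p) : Qcar p :=
  let: (x1, x2, x3) := x in
  let: (y1, y2, y3) := y in
  (x1 + y1 + (x2 + y2) * x3 * y3 + a *+ ovf x2 y2 + b *+ ovf x3 y3,
   x2 + y2, x3 + y3).

Definition Q_isomorphic (p : nat) (a1 b1 a2 b2 : 'Z_p) : Prop :=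
  exists f : Qcar p -> Qcar p,
    bijective f /\ forall x y, f (Qmul a1 b1 x y) = Qmul a2 b2 (f x) (f y).

(* a is a quadratic residue mod p (a square in Z_p; used for a <> 0) *)
Definition qres (p : nat) (a : 'Z_p) : bool := [exists x : 'Z_p, x ^+ 2 == a].

(* Main.v *)
Require Import Defs.
From HB Require Import structures.
From mathcomp Require Import all_boot all_order all_algebra.
From Stdlib Require Import Lia.
Set Implicit Arguments. Unset Strict Implicit. Unset Printing Implicit Defensive.
Import GRing.Theory.
Local Open Scope ring_scope.

Lemma natfact (m q v : nat) : (m + m = q.+1)%N -> (v < q.+2)%N -> (m < v)%N -> (q.+2 - v <= m)%N.
Proof. move=> /eqP/eqnP h /ssrnat.ltP h1 /ssrnat.ltP h2; apply/ssrnat.leP. rewrite -!plusE -!minusE in h *. lia. Qed.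

Lemma natfact2 (m q v w : nat) : (m + m = q.+1)%N -> (v < q.+2)%N -> (0 < v)%N -> (w <= m)%N -> (v <= m)%N -> w = (q.+2 - v)%N -> False.
Proof. move=> /eqP/eqnP h /ssrnat.ltP h1 /ssrnat.ltP h2 /ssrnat.leP h3 /ssrnat.leP h4. rewrite -!plusE -!minusE in h *. lia. Qed.

Section S.
Variable q : nat.
Hypothesis pr : prime q.+2.
Hypothesis od : odd q.+2.
Local Notation T := 'Z_q.+2.

Lemma unitT (x : T) : x != 0 -> x \is a GRing.unit.
Proof.
move=> nz; rewrite -(natr_Zp x) unitZpE // prime_coprime //.
apply/negP => /dvdn_leq; have := ltn_ord x.
have : (0 < x)%N by rewrite lt0n; apply: contra nz => /eqP H; apply/eqP/val_inj.
by move=> -> /= /[swap] /(_ isT) H1; rewrite ltnNge H1.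
Qed.

Lemma mulT_eq0 (x y : T) : x * y = 0 -> x = 0 \/ y = 0.
Proof.
case: (eqVneq x 0) => [->|nz]; first by left.
by move=> H; right; apply: (mulrI (unitT nz)); rewrite H mulr0.
Qed.

Lemma valN (x : T) : x != 0 -> val (- x) = (q.+2 - val x)%N.
Proof.
move=> nz; have : (0 < x)%N by rewrite lt0n; apply: contra nz => /eqP H; apply/eqP/val_inj.
move=> b; rewrite /=; change (Zp_trunc q.+2) with q.
by rewrite modn_small // ltn_subrL b.
Qed.
Lemma sqr_eq (x y : T) : x ^+ 2 = y ^+ 2 -> x = y \/ x = - y.
Proof.
move=> /eqP; rewrite -subr_eq0 subr_sqr => /eqP /mulT_eq0 [/eqP|/eqP].
  by rewrite subr_eq0 => /eqP; left.
by rewrite addr_eq0 => /eqP; right.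
Qed.

Lemma nonsq_cover (a b : T) : a != 0 -> b != 0 -> ~~ qres a -> ~~ qres b ->
  exists x : T, x != 0 /\ b = a * x ^+ 2.
Proof.
move=> a0 b0 qa qb.
set m := (q.+2)./2.
have hm : (m.*2 = q.+1)%N.
  by move: (odd_double_half q.+2); rewrite od add1n => /succn_inj.
pose Nz := [set x : T | x != 0].
have cNz : #|Nz| = q.+1.
  have -> : Nz = [set~ 0] by apply/setP => x; rewrite !inE.
  by rewrite cardsC1 card_ord.
pose H := [set x : T | (x != 0) && (val x <= m)%N].
have cH : (q.+1 <= 2 * #|H|)%N.
  have sub : Nz \subset H :|: [set - x | x in H].
    apply/subsetP => x; rewrite !inE => nz.
    case: (leqP (val x) m) => hx; first by rewrite nz.
    apply/orP; right; apply/imsetP; exists (- x); last by rewrite opprK.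
    rewrite inE oppr_eq0 nz valN //=.
    move: hx hm (ltn_ord x); change (Zp_trunc q.+2) with q => hx hm lt.
    rewrite -addnn in hm; exact: (natfact hm lt hx).
  have := subset_leq_card sub; rewrite cNz => /leq_trans; apply.
  by rewrite mul2n -addnn (leq_trans (leq_card_setU _ _)) // card_imset //; apply: oppr_inj.
pose Sq := [set x ^+ 2 | x in Nz].
have cSq : (#|H| <= #|Sq|)%N.
  have -> : #|H| = #|[set x ^+ 2 | x in H]|.
    apply/esym/eqP/imset_injP => x y; rewrite !inE => /andP[xn xm] /andP[yn ym].
    move/sqr_eq => [//|xy]; exfalso.
    have : val x = (q.+2 - val y)%N by rewrite xy valN.
    move: xm ym hm (ltn_ord y); change (Zp_trunc q.+2) with q.
    rewrite -addnn => xm ym hm' lt ex.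
    have y0 : (0 < val y)%N.
      by rewrite lt0n; apply: contra yn => /eqP H0; apply/eqP/val_inj.
    exact: (natfact2 hm' lt y0 xm ym ex).
  apply: subset_leq_card; apply/subsetP => z /imsetP[x]; rewrite inE => /andP[xn _] ->.
  by apply/imsetP; exists x; rewrite // inE.
pose A := [set a * x | x in Sq].
have cA : #|A| = #|Sq| by rewrite card_imset //; apply: mulrI; apply: unitT.
have dis : [disjoint Sq & A].
  apply/pred0P => z /=; apply/negP => /andP[/imsetP[y _ ->] /imsetP[w /imsetP[x]]].
  rewrite inE => xn -> e.
  move: qa; apply/negP/negPn/existsP; exists (y / x); apply/eqP.
  by rewrite expr_div_n e mulrK // unitrX // unitT.
have sU : Sq :|: A \subset Nz.
  apply/subsetP => z; rewrite inE => /orP[/imsetP[x]|/imsetP[w /imsetP[x]]];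
    rewrite inE => xn; [move=> ->| move=> -> ->]; rewrite inE.
    by apply/eqP => /mulT_eq0 [] /eqP; apply/negP.
  apply/eqP => /mulT_eq0 [/eqP|/mulT_eq0 [] /eqP]; apply/negP => //.
have eU : Sq :|: A = Nz.
  apply/eqP; rewrite eqEcard sU /= cNz.
  rewrite -(leq_add2r #|Sq :&: A|) cardsUI.
  move: dis; rewrite -setI_eq0 => /eqP ->; rewrite cards0 addn0 cA addnn -mul2n.
  by rewrite (leq_trans cH) // leq_mul2l.
have : b \in Sq :|: A by rewrite eU inE.
rewrite inE => /orP[/imsetP[x _ e]|/imsetP[w /imsetP[x]]].
  by move: qb; rewrite /qres; move/negP => []; apply/existsP; exists x; rewrite e.
by rewrite inE => xn -> ->; exists x.
Qed.
Lemma ratio (a1 a2 : T) : a1 != 0 -> a2 != 0 -> qres a1 = qres a2 ->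
  exists mu : T, mu \is a GRing.unit /\ a2 = a1 * mu ^+ 2.
Proof.
move=> n1 n2; case: (boolP (qres a1)) => q1 q2.
  move: (q1); rewrite /qres => /existsP[s /eqP e1].
  have : qres a2 by rewrite -q2.
  rewrite /qres => /existsP[t /eqP e2].
  have us : s \is a GRing.unit.
    by apply: unitT; apply: contra n1 => /eqP s0; rewrite -e1 s0 expr0n.
  have ut : t \is a GRing.unit.
    by apply: unitT; apply: contra n2 => /eqP s0; rewrite -e2 s0 expr0n.
  exists (t / s); split; first by rewrite unitrMl // unitrV.
  by rewrite -e1 -e2 expr_div_n mulrC mulrVK // unitrX.
have q2' : ~~ qres a2 by rewrite -q2.
have [x [xn ->]] := nonsq_cover n1 n2 q1 q2'.
by exists x; split => //; apply: unitT.
Qed.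

Theorem main (a1 a2 : T) : a1 != 0 -> a2 != 0 -> qres a1 = qres a2 ->
  Q_isomorphic a1 0 a2 0.
Proof.
move=> n1 n2 q12; have [mu [um e]] := ratio n1 n2 q12.
pose f (x : Qcar q.+2) : Qcar q.+2 := let: (x1, x2, x3) := x in (mu ^+ 2 * x1, x2, mu * x3).
pose g (x : Qcar q.+2) : Qcar q.+2 := let: (x1, x2, x3) := x in (mu^-1 ^+ 2 * x1, x2, mu^-1 * x3).
exists f; split.
  exists g => [[[x1 x2] x3]|[[x1 x2] x3]] /=.
    by rewrite exprVn !mulKr ?unitrX.
  by rewrite exprVn !mulVKr ?unitrX.
move=> [[x1 x2] x3] [[y1 y2] y3] /=.
rewrite /Qmul /= !mul0rn !addr0 e !mulrDr; congr (_ + _, _, _).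
  congr (_ + _).
  by rewrite -[in RHS]mulrA [in RHS]mulrACA -expr2 [RHS]mulrCA !mulrA.
by rewrite mulrnAr mulrC.
Qed.
End S.

Theorem lemma5p7 (p : nat) (a1 a2 : 'Z_p) :
  prime p -> odd p -> a1 != 0 -> a2 != 0 ->
  qres a1 = qres a2 ->
  Q_isomorphic a1 0 a2 0.
Proof.
move: a1 a2; case: p => [|[|q]] a1 a2 pr od //.
exact: main.
Qed.
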